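(* Let $\mathsf C$ be a rainbow cycle and let $\mathsf X$ be either a rainbow cycle or a bad piece. Assume that $\chi(\mathsf X)\cap\chi(\mathsf C\setminus\mathsf X)=\emptyset$, that $E(\mathsf C)\setminus E(\mathsf X)\neq\emptyset$, and that $|V(\mathsf C)\cap V(\mathsf X)|\ge 2$. Then there is a rainbow even cycle all of whose (colored) edges belong to $\mathsf C\cup\mathsf X$.
   Context: A (colored) graph is a finite set $\mathsf G$ of pairs $(e,\alpha)$, where the $e$'s are pairwise distinct 2-element subsets of a vertex set and $\alpha$ is a color (colors may repeat). $V(\mathsf G)$, $E(\mathsf G)$, $\chi(\mathsf G)$ denote its vertex set, its set of underlying uncolored edges, and its set of colors; $\mathsf C\setminus\mathsf X$ is set difference of colored edges. $\mathsf G$ is rainbow if $|\chi(\mathsf G)|=|\mathsf G|$ and almost rainbow if $|\chi(\mathsf G)|=|\mathsf G|-1$. Paths and cycles are colored graphs whose underlying uncolored edges form a path (with two distinct terminals) or a cycle; an even cycle has an even number of edges. A theta graph is a union $\mathsf P_1\cup\mathsf P_2\cup\mathsf P_3$ of three paths with the same terminals $s\neq t$ such that any two of them share no vertex other than $s,t$ and no underlying uncolored edge. A bad piece is an almost rainbow theta graph with at least $6$ vertices that is the union of three rainbow paths $\mathsf P_1,\mathsf P_2,\mathsf P_3$ as in the definition of a theta graph. *)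

(* Defs.v *)
From mathcomp Require Import all_boot.
Set Implicit Arguments. Unset Strict Implicit. Unset Printing Implicit Defensive.

Section ColoredGraphs.
Variables (T K : finType).

Definition cedge := ({set T} * K)%type.
Definition cgraph := {set cedge}.

Definition is_graph (G : cgraph) : Prop :=
  (forall p, p \in G -> #|p.1| = 2) /\
  (forall p q, p \in G -> q \in G -> p.1 = q.1 -> p = q).

Definition Vtx (G : cgraph) : {set T} := \bigcup_(p in G) p.1.
Definition Edg (G : cgraph) : {set {set T}} := [set p.1 | p in G].
Definition Col (G : cgraph) : {set K} := [set p.2 | p in G].

Definition rainbow (G : cgraph) : Prop := #|Col G| = #|G|.
Definition almost_rainbow (G : cgraph) : Prop := #|Col G|.+1 = #|G|.

Definition path_edges (s : seq T) : {set {set T}} :=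
  [set [set x.1; x.2] | x in zip s (behead s)].
Definition cycle_edges (s : seq T) : {set {set T}} :=
  [set [set x.1; x.2] | x in zip s (rot 1 s)].

Definition is_path (G : cgraph) (a b : T) : Prop :=
  is_graph G /\
  exists q : seq T,
    [/\ a != b, uniq (a :: q), last a q = b & Edg G = path_edges (a :: q)].

Definition is_cycle (G : cgraph) : Prop :=
  is_graph G /\
  exists s : seq T, [/\ uniq s, 3 <= size s & Edg G = cycle_edges s].

Definition even_cycle (G : cgraph) : Prop := is_cycle G /\ ~~ odd #|G|.

Definition theta_of (G P1 P2 P3 : cgraph) (s t : T) : Prop :=
  [/\ is_graph G, G = P1 :|: P2 :|: P3,
      [/\ is_path P1 s t, is_path P2 s t & is_path P3 s t],
      [/\ Vtx P1 :&: Vtx P2 \subset [set s; t],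
          Vtx P1 :&: Vtx P3 \subset [set s; t] &
          Vtx P2 :&: Vtx P3 \subset [set s; t]] &
      [/\ Edg P1 :&: Edg P2 = set0,
          Edg P1 :&: Edg P3 = set0 &
          Edg P2 :&: Edg P3 = set0]].

Definition is_theta (G : cgraph) : Prop :=
  exists P1 P2 P3 s t, theta_of G P1 P2 P3 s t.

Definition bad_piece (G : cgraph) : Prop :=
  [/\ almost_rainbow G, 6 <= #|Vtx G| &
      exists P1 P2 P3 s t,
        [/\ theta_of G P1 P2 P3 s t, rainbow P1, rainbow P2 & rainbow P3]].

End ColoredGraphs.

(* Main.v *)
Require Import Defs.
From mathcomp Require Import all_boot.
Set Implicit Arguments. Unset Strict Implicit. Unset Printing Implicit Defensive.

Section Seqs.
Variable T : finType.
Implicit Types (E : {set {set T}}) (r : rel T).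

Definition adj E : rel T := fun a b => [set a; b] \in E.
Lemma adjC E : symmetric (adj E).
Proof. by move=> a b; rewrite /adj setUC. Qed.

Lemma path_all r x q : path r x q = all (fun p => r p.1 p.2) (zip (x::q) q).
Proof. by elim: q x => //= y q IH x; rewrite IH. Qed.

Lemma path_rcons_all r x l z :
  path r x (rcons l z) = all (fun p => r p.1 p.2) (zip (x :: l) (rcons l z)).
Proof. by elim: l x => [|y l IH] x /=; rewrite ?IH. Qed.

Lemma pe_sub E x q : (path_edges (x::q) \subset E) = path (adj E) x q.
Proof.
rewrite path_all; apply/subsetP/allP => [H p Hp|H f /imsetP [p Hp ->]].
  by apply: H; apply/imsetP; exists p.
exact: H p Hp.
Qed.

Lemma ce_sub E s : (cycle_edges s \subset E) = cycle (adj E) s.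
Proof.
case: s => [|x s]; first by apply/subsetP => f /imsetP [p].
rewrite /= path_rcons_all /cycle_edges rot1_cons.
apply/subsetP/allP => [H p Hp|H f /imsetP [p Hp ->]].
  by apply: H; apply/imsetP; exists p.
exact: H p Hp.
Qed.

Lemma uniq_cat_disj (l1 l2 : seq T) :
  uniq l1 -> uniq l2 -> (forall v, v \in l1 -> v \in l2 -> False) -> uniq (l1 ++ l2).
Proof.
move=> U1 U2 D; rewrite cat_uniq U1 U2 andbT; apply/hasPn => v /= H2.
by apply/negP => H1; apply: (D v).
Qed.

Lemma ear_lemma (e rY : rel T) (y q : seq T) (u w : T) :
  symmetric e -> symmetric rY -> uniq y -> 2 < size y -> cycle e y -> cycle rY y ->
  u \in y -> w \in y -> u != w ->
  path e u (rcons q w) -> uniq (u :: rcons q w) -> (forall v, v \in q -> v \notin y) ->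
  (q = [::] -> ~~ rY u w) ->
  exists s, [/\ uniq s, 2 < size s, ~~ odd (size s) & cycle e s].
Proof.
move=> Se SY Uy Sy Cy CYy uy wy uw Pq Uq Dq Hq.
case/rot_to: uy => i y1 Hrot.
have Uy' : uniq (u :: y1) by rewrite -Hrot rot_uniq.
have Cy' : cycle e (u :: y1) by rewrite -Hrot rot_cycle.
have CYy' : cycle rY (u :: y1) by rewrite -Hrot rot_cycle.
have My : forall v, (v \in y) = (v \in u :: y1) by move=> v; rewrite -Hrot mem_rot.
have Sz : size y = size (u :: y1) by rewrite -Hrot size_rot.
have wy1 : w \in y1 by move: wy; rewrite My inE eq_sym (negbTE uw).
case/splitPr: wy1 Uy' Cy' CYy' My Sz => a b Uy' Cy' CYy' My Sz.
case: (boolP (odd (size y))) => Hodd; last by exists y.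
have Hrev : path e w (rcons (rev q) u).
  have := Pq; rewrite -rev_path last_rcons belast_rcons rev_cons.
  by rewrite (eq_path (e' := e)) // => x z; rewrite Se.
move: Cy'; rewrite /= rcons_cat cat_path /= => /and3P [Pa ew Pb].
move: Uq; rewrite /= mem_rcons inE negb_or rcons_uniq => /andP [/andP [_ uq] /andP [wq Uq]].
have Dq' : forall v, v \in q -> v \in u :: a ++ w :: b -> False.
  by move=> v vq; rewrite -My; move/negP: (Dq v vq).
case: (boolP (odd (size (u :: a ++ w :: rev q)))) => HA; last first.
  exists (u :: a ++ w :: rev q); split => //.
  - rewrite -cat_rcons -cat_cons uniq_cat_disj ?rev_uniq //.
      by move: Uy'; rewrite -cat_rcons -cat_cons cat_uniq => /andP [].
    move=> v H1; rewrite mem_rev => H2; apply: (Dq' v H2).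
    by move: H1; rewrite -cat_cons -cat_rcons mem_cat => ->.
  - rewrite /= size_cat /= size_rev.
    case: a Pa ew CYy' {Uy' My Sz Hodd HA Dq'} => [|x a] /=; last by move=> *; rewrite addSn addnS.
    case: q Hq Pq Hrev Uq wq uq Dq => [|x q]; last by move=> *; rewrite add0n.
    move=> Hq _ _ _ _ _ _ _ _ /andP [ruw _].
    by rewrite ruw in Hq; case: (Hq erefl).
  - by rewrite /= rcons_cat cat_path /= Pa ew.
exists (w :: b ++ u :: q); split.
- have -> : w :: b ++ u :: q = (w :: rcons b u) ++ q by rewrite -cat_rcons.
  apply: uniq_cat_disj => //.
    have U2 : uniq ((w :: b) ++ (u :: a)) by rewrite uniq_catC.
    by move: U2; rewrite cat_cons -cat_rcons -cat_cons cat_uniq => /andP [].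
  move=> v H1 H2; apply: (Dq' v H2); move: H1.
  by rewrite inE mem_rcons !inE mem_cat !inE; case/orP => [->|/orP [->|->]]; rewrite ?orbT.
- rewrite /= size_cat /= .
  case: b Pb CYy' {Uy' My Sz Hodd HA Dq'} => [|x b] /=; last by move=> *; rewrite addnS.
  case: q Hq Pq Hrev Uq wq uq Dq => [|x q]; last by move=> *; rewrite addnS.
  move=> Hq _ _ _ _ _ _ _; rewrite rcons_path cats1 last_rcons => /andP [_ rwu].
  by rewrite SY rwu in Hq; case: (Hq erefl).
- move: Sz HA Hodd; rewrite /= !size_cat /= size_rev => ->.
  rewrite !addnS /= !oddD.
  by case: (odd (size a)); case: (odd (size b)); case: (odd (size q)).
- by move: Pb; rewrite rcons_path /= rcons_cat cat_path /= Pq andbT => /andP [-> ->].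
Qed.

End Seqs.
Section Seqs2.
Variable T : finType.

Lemma cycle_all (r : rel T) s : cycle r s = all (fun p => r p.1 p.2) (zip s (rot 1 s)).
Proof.
case: s => [|x s] //=; rewrite rot1_cons.
exact: path_rcons_all.
Qed.

Lemma next_next_neq (s : seq T) x : uniq s -> 2 < size s -> x \in s -> next s (next s x) != x.
Proof.
move=> Us Ss xs; case/rot_to: xs => i s1 Hr.
rewrite -!(next_rot i Us) Hr.
have : uniq (x :: s1) by rewrite -Hr rot_uniq.
have : 2 < size (x :: s1) by rewrite -Hr size_rot.
case: s1 {Hr} => [|y [|z s2]] //= _.
move=> /and4P [xs ys _ _]; rewrite eqxx.
move: xs ys; rewrite !inE !negb_or => /and3P [xy xz _] /andP [yz _].
by rewrite (eq_sym y x) (negbTE xy) eqxx eq_sym.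
Qed.

Lemma card_cycle_edges (s : seq T) : uniq s -> 2 < size s -> #|cycle_edges s| = size s.
Proof.
move=> Us Ss.
have Hz : forall p, p \in zip s (rot 1 s) -> p.1 \in s /\ next s p.1 = p.2.
  move=> p pz; split.
    have <- : unzip1 (zip s (rot 1 s)) = s by rewrite unzip1_zip // size_rot.
    exact: map_f.
  have := cycle_next Us; rewrite cycle_all => /allP /(_ p pz) /=.
  by move/eqP.
rewrite /cycle_edges card_in_imset; last first.
  move=> [a b] [c d] /Hz [/= as1 ab] /Hz [/= cs cd] E.
  have : a \in [set c; d] by rewrite -E !inE eqxx.
  rewrite !inE => /orP [/eqP ac|/eqP ad].
    by rewrite -ab -cd ac.
  have : c \in [set a; b] by rewrite E !inE eqxx.
  rewrite !inE => /orP [/eqP ca|/eqP cb].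
    by rewrite -ab -cd ca.
  exfalso; move: (next_next_neq Us Ss as1); rewrite ab -cb cd -ad.
  by rewrite eqxx.
by rewrite (card_uniqP (zip_uniql (rot 1 s) Us)) size_zip size_rot minnn.
Qed.

End Seqs2.

Section Colored.
Variables T K : finType.
Implicit Types G H : cgraph T K.

Lemma rainbowP G : rainbow G <-> {in G &, injective (fun p : cedge T K => p.2)}.
Proof.
rewrite /rainbow /Col; split => [H|H]; first by apply/imset_injP; rewrite H.
exact: card_in_imset.
Qed.

Lemma rainbowS G H : G \subset H -> rainbow H -> rainbow G.
Proof.
move=> /subsetP GH /rainbowP RH; apply/rainbowP => p q pG qG.
by apply: RH; apply: GH.
Qed.

Lemma make_D H (s : seq T) :
  is_graph H -> rainbow H -> uniq s -> 2 < size s -> ~~ odd (size s) ->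
  cycle (adj (Edg H)) s ->
  exists2 D, even_cycle D /\ rainbow D & D \subset H.
Proof.
move=> [G2 Ginj] RH Us Ss Es Cs.
have Hsub : cycle_edges s \subset Edg H by rewrite ce_sub.
pose D := [set p in H | p.1 \in cycle_edges s].
have DH : D \subset H by apply/subsetP => p; rewrite inE => /andP [].
have GD : is_graph D.
  split=> [p|p q]; rewrite !inE => /andP [pH _]; first exact: G2.
  by move=> /andP [qH _]; apply: Ginj.
have ED : Edg D = cycle_edges s.
  apply/setP => f; apply/imsetP/idP => [[p]|fs].
    by rewrite inE => /andP [_ ?] ->.
  move/subsetP: Hsub => /(_ f fs) /imsetP [p pH pf].
  by exists p => //; rewrite inE pH -pf fs.
exists D => //; split; last exact: rainbowS RH.
split; first by split=> //; exists s.
have -> : #|D| = #|Edg D|.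
  rewrite /Edg card_in_imset // => p q; rewrite !inE => /andP [pH _] /andP [qH _].
  exact: Ginj.
by rewrite ED card_cycle_edges.
Qed.

End Colored.

Section Seqs3.
Variable T : finType.

Lemma path_andb (r1 r2 : rel T) x s :
  path r1 x s -> path r2 x s -> path (fun a b => r1 a b && r2 a b) x s.
Proof. by elim: s x => //= y s IH x /andP [-> P1] /andP [-> P2] /=; apply: IH. Qed.

Lemma sorted_infix (r : rel T) p1 m p2 : sorted r (p1 ++ m ++ p2) -> sorted r m.
Proof. by case/cat_sorted2 => _ /cat_sorted2 []. Qed.

Variables (A : {set T}) (rX : rel T).
Hypothesis HrX : forall a b, rX a b -> (a \in A) && (b \in A).

Lemma seg_find t : forall z qs, z \in A -> all (fun v => v \notin A) qs ->
  last z (qs ++ t) \in A -> (qs != [::]) || ~~ path rX z t ->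
  exists p1 u qe w p2, [/\ z :: qs ++ t = p1 ++ u :: rcons qe w ++ p2,
     u \in A, w \in A, all (fun v => v \notin A) qe & ~~ path rX u (rcons qe w)].
Proof.
elim: t => [|x t IH] z qs zA qsA.
  rewrite cats0 /= orbF; case: qs qsA => // y qs qsA Hl _.
  by have := allP qsA _ (mem_last y qs); rewrite /= Hl.
rewrite last_cat /= => Hl Hq.
case: (boolP (x \in A)) => xA.
  case: (boolP (qs == [::])) Hq => [/eqP -> /= Hq | qsn _].
    case: (boolP (rX z x)) Hq => /= rzx Hq; last first.
      by exists [::], z, [::], x, t; split => //=; rewrite (negbTE rzx).
    have [p1 [u [qe [w [p2 [E uA wA qeA H]]]]]] : exists p1 u qe w p2,
      [/\ x :: [::] ++ t = p1 ++ u :: rcons qe w ++ p2, u \in A, w \in A,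
          all (fun v => v \notin A) qe & ~~ path rX u (rcons qe w)].
      by apply: IH => //=; rewrite Hq.
    by exists (z :: p1), u, qe, w, p2; split => //=; rewrite -E.
  exists [::], z, qs, x, t; split => //=.
    by rewrite cat_rcons.
  case: qs qsA qsn => // y qs /= /andP [yA _] _.
  by apply/negP => /andP [/HrX /andP [_]]; rewrite (negbTE yA).
have [p1 [u [qe [w [p2 [E uA wA qeA H]]]]]] : exists p1 u qe w p2,
  [/\ z :: (rcons qs x) ++ t = p1 ++ u :: rcons qe w ++ p2, u \in A, w \in A,
      all (fun v => v \notin A) qe & ~~ path rX u (rcons qe w)].
  apply: IH => //.
  - by rewrite all_rcons xA.
  - by rewrite last_cat last_rcons.
  - by case: qs {Hl Hq qsA}.
by exists p1, u, qe, w, p2; split => //; rewrite -E cat_rcons.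
Qed.

Lemma nrX_path qe : forall u w, all (fun v => v \notin A) qe -> qe != [::] ->
  path (fun a b => ~~ rX a b) u (rcons qe w).
Proof.
have nA : forall a b, (a \notin A) || (b \notin A) -> ~~ rX a b.
  by move=> a b H; apply/negP => /HrX /andP [aA bA]; rewrite aA bA in H.
elim: qe => // x l IH u w /= /andP [xA lA] _.
rewrite nA ?xA ?orbT //=.
case: l IH lA => [|y l] IH lA /=; first by rewrite nA ?xA.
by have := IH x w lA isT.
Qed.

End Seqs3.

Section Colored2.
Variables T K : finType.
Implicit Types G H : cgraph T K.

Lemma mem_unzip1 (s t : seq T) v : v \in unzip1 (zip s t) -> v \in s.
Proof.
elim: s t => [|x s IH] [|y t] //=; rewrite !inE => /orP [->//|/IH ->]; by rewrite orbT.
Qed.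

Lemma VtxE G (Z : seq (T * T)) : Edg G = [set [set p.1; p.2] | p in Z] ->
  forall v, (v \in Vtx G) = (v \in unzip1 Z) || (v \in unzip2 Z).
Proof.
move=> EG v; apply/bigcupP/orP => [[p pG vp]|].
  have : p.1 \in Edg G by apply/imsetP; exists p.
  rewrite EG => /imsetP [z zZ pz]; move: vp; rewrite pz !inE => /orP [/eqP ->|/eqP ->].
    by left; apply: map_f.
  by right; apply: map_f.
have H1 : forall z, z \in Z -> exists2 p, p \in G & p.1 = [set z.1; z.2].
  move=> z zZ; have : [set z.1; z.2] \in Edg G by rewrite EG; apply/imsetP; exists z.
  by case/imsetP => p pG ->; exists p.
case=> /mapP [z zZ ->]; have [p pG pz] := H1 z zZ; exists p => //; by rewrite pz !inE eqxx ?orbT.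
Qed.

Lemma Vtx_cycle G c : Edg G = cycle_edges c -> forall v, (v \in Vtx G) = (v \in c).
Proof.
move=> EG v; rewrite (VtxE EG) unzip1_zip ?size_rot // unzip2_zip ?size_rot // mem_rot.
by rewrite orbb.
Qed.

Lemma Vtx_path G x q : Edg G = path_edges (x :: q) -> q != [::] ->
  forall v, (v \in Vtx G) = (v \in x :: q).
Proof.
move=> EG qn v; rewrite (VtxE EG) /= unzip2_zip ?leqnSn //.
case: q qn {EG} => // y q _.
rewrite [in RHS]inE; apply/orP/orP => [[/mem_unzip1|]|[/eqP ->|]].
- by rewrite inE => /orP.
- by right.
- by left; rewrite /= inE eqxx.
- by right.
Qed.

Lemma adj_Vtx G a b : adj (Edg G) a b -> (a \in Vtx G) && (b \in Vtx G).
Proof.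
case/imsetP => p pG Hp; apply/andP; split; apply/bigcupP; exists p => //;
by rewrite -Hp !inE eqxx ?orbT.
Qed.

Lemma ear_exists (C X : cgraph T K) (c : seq T) :
  uniq c -> Edg C = cycle_edges c -> ~~ cycle (adj (Edg X)) c ->
  1 < #|[set v | v \in c] :&: Vtx X| ->
  exists u qe w, [/\ (u \in Vtx X) && (w \in Vtx X), u != w, uniq (u :: rcons qe w),
    all (fun v => v \notin Vtx X) qe &
    path (fun a b => adj (Edg C) a b && ~~ adj (Edg X) a b) u (rcons qe w)].
Proof.
move=> Uc EC nCX Hcard.
set A := Vtx X.
have [z zc zA] : exists2 z, z \in c & z \in A.
  have : 0 < #|[set v | v \in c] :&: A| by apply: leq_trans Hcard.
  by rewrite card_gt0 => /set0Pn [z]; rewrite !inE => /andP [? ?]; exists z.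
case/rot_to: zc => i c1 Hr.
have Uz : uniq (z :: c1) by rewrite -Hr rot_uniq.
have Mz : forall v, (v \in c) = (v \in z :: c1) by move=> v; rewrite -Hr mem_rot.
have Cc : cycle (adj (Edg C)) (z :: c1) by rewrite -Hr rot_cycle -ce_sub EC subxx.
have nCz : ~~ path (adj (Edg X)) z (rcons c1 z) by move: nCX; rewrite -(rot_cycle i) Hr.
have Hl : last z ([::] ++ rcons c1 z) \in A by rewrite /= last_rcons.
have Hn : ([::] != [::] :> seq T) || ~~ path (adj (Edg X)) z (rcons c1 z) by rewrite nCz.
have [p1 [u [qe [w [p2 [E uA wA qeA nP]]]]]] :=
  @seg_find T A (adj (Edg X)) (@adj_Vtx X) (rcons c1 z) z [::] zA isT Hl Hn.
rewrite /= in E.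
have Us : uniq (u :: rcons qe w).
  case: p1 E => [|x p1] E; last first.
    have U1 : uniq (rcons c1 z) by rewrite rcons_uniq; move: Uz => /= /andP [-> ->].
    case: E => _ E; move: U1; rewrite E cat_uniq => /and3P [_ _].
    by rewrite -cat_cons cat_uniq => /andP [].
  case/lastP: p2 E => [|p2 v] E.
    exfalso; rewrite cats0 in E; case: E => Eu Ec.
    case: (rcons_inj Ec) => Ec1 _; subst qe.
    have : #|[set v | v \in c] :&: A| <= 1.
      rewrite -(cards1 z); apply: subset_leq_card; apply/subsetP => v.
      rewrite !inE Mz inE => /andP [/orP [/eqP ->//|vc1] vA].
      by have := allP qeA v vc1; rewrite vA.
    by rewrite leqNgt Hcard.
  have E2 : rcons (z :: c1) z = rcons (u :: rcons qe w ++ p2) v.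
    by rewrite rcons_cons E rcons_cons rcons_cat.
  case: (rcons_inj E2) => E1 E3 _.
  by move: Uz; rewrite E1 E3 -cat_cons cat_uniq => /andP [].
have uw : u != w.
  by apply/negP => /eqP uw; move: Us; rewrite /= uw mem_rcons inE eqxx.
have Ps : path (adj (Edg C)) u (rcons qe w).
  have H0 : sorted (adj (Edg C)) (z :: rcons c1 z) by [].
  have := @sorted_infix T (adj (Edg C)) p1 (u :: rcons qe w) p2.
  by move=> H; apply: H; rewrite cat_cons -E.
have Pn : path (fun a b => ~~ adj (Edg X) a b) u (rcons qe w).
  case: (boolP (qe == [::])) => [/eqP qe0|qen]; last exact: (@nrX_path T A (adj (Edg X)) (@adj_Vtx X) qe u w qeA qen).
  by subst qe; move: nP; rewrite /= !andbT.
exists u, qe, w; split => //; first by rewrite uA wA.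
exact: path_andb.
Qed.

End Colored2.

Section Theta.
Variable T : finType.

Lemma rev_ear (e : rel T) u q w : symmetric e -> path e u (rcons q w) ->
  path e w (rcons (rev q) u).
Proof.
move=> Se Pq; have := Pq; rewrite -rev_path last_rcons belast_rcons rev_cons.
by rewrite (eq_path (e' := e)) // => x z; rewrite Se.
Qed.

Lemma rev_ear_uniq u (q : seq T) w : uniq (u :: rcons q w) -> uniq (w :: rcons (rev q) u).
Proof. by rewrite -rev_uniq rev_cons rev_rcons. Qed.

Lemma theta_cycle (s t : T) (l1 l2 : seq T) : s != t ->
  uniq (s :: rcons l1 t) -> uniq (s :: rcons l2 t) ->
  (forall v, v \in l1 -> v \in l2 -> False) -> (l1 != [::]) || (l2 != [::]) ->
  exists y, [/\ uniq y, 2 < size y, forall v, (v \in y) = (v \in s :: t :: l1 ++ l2) &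
    forall r : rel T, symmetric r -> path r s (rcons l1 t) -> path r s (rcons l2 t) -> cycle r y].
Proof.
move=> st U1 U2 D N.
exists (s :: l1 ++ t :: rev l2); split.
- rewrite -cat_rcons -cat_cons uniq_cat_disj ?rev_uniq //.
    by move: U2; rewrite /= rcons_uniq => /andP [_ /andP [_ ->]].
  move=> v; rewrite mem_rev inE mem_rcons inE => H1 H2.
  move: U2; rewrite /= mem_rcons inE negb_or rcons_uniq => /andP [/andP [_ sl2] /andP [tl2 _]].
  case/orP: H1 => [/eqP vs|/orP [/eqP vt|vl1]].
  + by rewrite -vs H2 in sl2.
  + by rewrite -vt H2 in tl2.
  + exact: D vl1 H2.
- rewrite /= size_cat /= size_rev.
  case: l1 N {U1 D} => [|? ?] /=; last by rewrite addSn addnS.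
  by case: l2 {U2} => [|? ?] //= _; rewrite addnS.
- move=> v; rewrite !inE !mem_cat !inE mem_rev.
  by case: (v == s); case: (v == t); case: (v \in l1); case: (v \in l2).
- move=> r Sr P1 P2; rewrite /= rcons_cat cat_path /= rev_ear //.
  by move: P1; rewrite rcons_path => /andP [-> ->].
Qed.

End Theta.

Section Core.
Variable T : finType.

Lemma case3 (s t : T) (la lb lc : seq T) (e : rel T) (u w : T) (qe : seq T) :
  s != t -> uniq (s :: rcons la t) -> uniq (s :: rcons lb t) -> uniq (s :: rcons lc t) ->
  (forall v, v \in la -> v \in lb -> False) -> (forall v, v \in la -> v \in lc -> False) ->
  (forall v, v \in lb -> v \in lc -> False) -> (la != [::]) || (lc != [::]) ->
  symmetric e -> path e s (rcons la t) -> path e s (rcons lc t) ->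
  (forall b1 v b2, lb = b1 ++ v :: b2 -> path e s (rcons b1 v) || path e v (rcons b2 t)) ->
  u \in lb -> w \in la -> uniq (u :: rcons qe w) ->
  (forall v, v \in qe -> v \notin s :: t :: la ++ lb ++ lc) ->
  path e u (rcons qe w) ->
  exists y, [/\ uniq y, 2 < size y, ~~ odd (size y) & cycle e y].
Proof.
move=> st Ua Ub Uc Dab Dac Dbc Nac Se Pa Pc Side ub wa Uq qV Pq.
have [y [Uy Sy My Cy]] := theta_cycle st Ua Uc Dac Nac.
have Cye := Cy e Se Pa Pc.
have [sa ta] : s \notin la /\ t \notin la.
  by move: Ua; rewrite /= mem_rcons inE negb_or rcons_uniq => /andP [/andP [_ ->] /andP [->]].
have [sb tb] : s \notin lb /\ t \notin lb.
  by move: Ub; rewrite /= mem_rcons inE negb_or rcons_uniq => /andP [/andP [_ ->] /andP [->]].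
have wq : w \notin qe by move: Uq; rewrite /= rcons_uniq => /andP [_ /andP []].
have Uq' : uniq (rcons qe w) by move: Uq; rewrite /= => /andP [].
have lbV : forall v, v \in lb -> v \in y = false.
  move=> v vb; rewrite My !inE !mem_cat.
  have vs : (v == s) = false by apply/negP => /eqP vs; rewrite -vs vb in sb.
  have vt : (v == t) = false by apply/negP => /eqP vt; rewrite -vt vb in tb.
  rewrite vs vt /=; apply/negP => /orP [va|vc]; [exact: Dab va vb | exact: Dbc vb vc].
have qy : forall v, v \in qe -> v \in y = false.
  move=> v vq; apply/negP; rewrite My => vy; move: (qV v vq); rewrite !inE !mem_cat.
  by move: vy; rewrite !inE !mem_cat => /orP [->|/orP [->|/orP [->|->]]]; rewrite ?orbT.
have qnV : forall v, v \in qe -> v \in lb -> False.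
  by move=> v vq vb; move: (qV v vq); rewrite !inE !mem_cat vb !orbT.
have wy : w \in y by rewrite My !inE mem_cat wa !orbT.
have wb : w \in lb = false by apply/negP => wb; exact: Dab wa wb.
case/splitPr: ub Ub Dab Dbc Side qV lbV qnV wb sb tb => b1 b2 Ub Dab Dbc Side qV lbV qnV wb sb tb.
have Hdisj : forall z, z \in u :: b1 ++ b2 -> (z \in qe -> False) /\ z != w /\ z \in y = false.
  move=> z zb; have zlb : z \in b1 ++ u :: b2.
    by move: zb; rewrite !inE !mem_cat !inE => /orP [->|/orP [->|->]]; rewrite ?orbT.
  split; first by move=> zq; exact: qnV zq zlb.
  split; last exact: lbV.
  by apply/negP => /eqP zw; rewrite -zw zlb in wb.
case/orP: (Side b1 u b2 erefl) => [L|R].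
  apply: (ear_lemma (rY := e) (y := y) (q := b1 ++ u :: qe) (u := s) (w := w)) => //.
  - by rewrite My inE eqxx.
  - by apply/negP => /eqP sw; rewrite sw wa in sa.
  - rewrite rcons_cat /= cat_path /= Pq andbT.
    by move: L; rewrite rcons_path.
  - have -> : s :: rcons (b1 ++ u :: qe) w = (s :: rcons b1 u) ++ rcons qe w.
      by rewrite rcons_cat /= cat_rcons.
    apply: uniq_cat_disj => //.
      move: Ub; have -> : s :: rcons (b1 ++ u :: b2) t = (s :: rcons b1 u) ++ rcons b2 t.
        by rewrite rcons_cat /= cat_rcons.
      by rewrite cat_uniq => /andP [].
    move=> v; rewrite inE mem_rcons inE mem_rcons inE => /orP [/eqP vs|/orP [/eqP vu|vb1]].
    + subst v; case/orP => [/eqP sw|sq]; first by rewrite sw wa in sa.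
      by move: (qV s sq); rewrite inE eqxx.
    + subst v; case/orP => [/eqP uw|uq]; first by have [_ [uw' _]] := Hdisj u (mem_head _ _); rewrite uw eqxx in uw'.
      by have [H _] := Hdisj u (mem_head _ _); exact: H uq.
    + have vb : v \in u :: b1 ++ b2 by rewrite inE mem_cat vb1 orbT.
      case: (Hdisj v vb) => Hq [vw _]; case/orP => [/eqP vw'|vq]; first by rewrite vw' eqxx in vw.
      exact: Hq.
  - move=> v; rewrite mem_cat inE => /orP [vb1|/orP [/eqP ->|vq]].
    + have vb : v \in u :: b1 ++ b2 by rewrite inE mem_cat vb1 orbT.
      by have [_ [_ ->]] := Hdisj v vb.
    + by have [_ [_ ->]] := Hdisj u (mem_head _ _).
    + by rewrite qy.
  - by move=> H; have := congr1 size H; rewrite size_cat /= addnS.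
have Rr := rev_ear Se R.
apply: (ear_lemma (rY := e) (y := y) (q := rev b2 ++ u :: qe) (u := t) (w := w)) => //.
- by rewrite My !inE eqxx orbT.
- by apply/negP => /eqP tw; rewrite tw wa in ta.
- rewrite rcons_cat /= cat_path /= Pq andbT.
  by move: Rr; rewrite rcons_path.
- have -> : t :: rcons (rev b2 ++ u :: qe) w = (t :: rcons (rev b2) u) ++ rcons qe w.
    by rewrite rcons_cat /= cat_rcons.
  apply: uniq_cat_disj => //.
    move: Ub; rewrite -rev_uniq /= rev_cons rev_rcons rev_cat /= rev_cons.
    rewrite -cats1 -catA /= cats1.
    by rewrite mem_cat negb_or cat_uniq => /andP [/andP [-> _] /andP [-> _]].
  move=> v; rewrite inE mem_rcons inE mem_rcons inE mem_rev => /orP [/eqP vt|/orP [/eqP vu|vb2]].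
  + subst v; case/orP => [/eqP tw|tq]; first by rewrite tw wa in ta.
    by move: (qV t tq); rewrite !inE eqxx orbT.
  + subst v; case/orP => [/eqP uw|uq]; first by have [_ [uw' _]] := Hdisj u (mem_head _ _); rewrite uw eqxx in uw'.
    by have [H _] := Hdisj u (mem_head _ _); exact: H uq.
  + have vb : v \in u :: b1 ++ b2 by rewrite inE mem_cat vb2 !orbT.
    case: (Hdisj v vb) => Hq [vw _]; case/orP => [/eqP vw'|vq]; first by rewrite vw' eqxx in vw.
    exact: Hq.
- move=> v; rewrite mem_cat inE mem_rev => /orP [vb2|/orP [/eqP ->|vq]].
  + have vb : v \in u :: b1 ++ b2 by rewrite inE mem_cat vb2 !orbT.
    by have [_ [_ ->]] := Hdisj v vb.
  + by have [_ [_ ->]] := Hdisj u (mem_head _ _).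
  + by rewrite qy.
- by move=> H; have := congr1 size H; rewrite size_cat /= addnS.
Qed.

End Core.

Section Core2.
Variable T : finType.

Lemma core (s t : T) (la lb lc : seq T) (e1 e2 rX : rel T) (u w : T) (qe : seq T) :
  s != t -> uniq (s :: rcons la t) -> uniq (s :: rcons lb t) -> uniq (s :: rcons lc t) ->
  (forall v, v \in la -> v \in lb -> False) -> (forall v, v \in la -> v \in lc -> False) ->
  (forall v, v \in lb -> v \in lc -> False) ->
  (la != [::]) || (lc != [::]) -> (lb != [::]) || (lc != [::]) ->
  symmetric e1 -> symmetric e2 -> symmetric rX ->
  path e2 s (rcons la t) -> path e2 s (rcons lc t) ->
  path e1 s (rcons lb t) -> path e1 s (rcons lc t) ->
  path rX s (rcons la t) -> path rX s (rcons lb t) -> path rX s (rcons lc t) ->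
  (forall b1 v b2, lb = b1 ++ v :: b2 -> path e2 s (rcons b1 v) || path e2 v (rcons b2 t)) ->
  u \in s :: t :: la ++ lb ++ lc -> w \in s :: t :: la ++ lb ++ lc -> u != w ->
  uniq (u :: rcons qe w) ->
  (forall v, v \in qe -> v \notin s :: t :: la ++ lb ++ lc) ->
  path e1 u (rcons qe w) -> path e2 u (rcons qe w) -> (qe = [::] -> ~~ rX u w) ->
  exists y, [/\ uniq y, 2 < size y, ~~ odd (size y) & cycle e1 y || cycle e2 y].
Proof.
move=> st Ua Ub Uc Dab Dac Dbc Nac Nbc Se1 Se2 SX Pa2 Pc2 Pb1 Pc1 PaX PbX PcX Side
  uV wV uw Uq qV Pq1 Pq2 Hq.
have [y1 [U1 S1 M1 C1]] := theta_cycle st Ua Uc Dac Nac.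
have [y2 [U2 S2 M2 C2]] := theta_cycle st Ub Uc Dbc Nbc.
have q1 : forall v, v \in qe -> v \notin y1.
  move=> v vq; rewrite M1; apply/negP => H; move: (qV v vq); rewrite !inE !mem_cat.
  by move: H; rewrite !inE !mem_cat => /orP [->|/orP [->|/orP [->|->]]]; rewrite ?orbT.
have q2 : forall v, v \in qe -> v \notin y2.
  move=> v vq; rewrite M2; apply/negP => H; move: (qV v vq); rewrite !inE !mem_cat.
  by move: H; rewrite !inE !mem_cat => /orP [->|/orP [->|/orP [->|->]]]; rewrite ?orbT.
case: (boolP ((u \in y1) && (w \in y1))) => [/andP [uy wy]|n1].
  have [z [Uz Sz Ez Cz]] := ear_lemma Se2 SX U1 S1 (C1 e2 Se2 Pa2 Pc2) (C1 rX SX PaX PcX)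
    uy wy uw Pq2 Uq q1 Hq.
  by exists z; rewrite Cz orbT.
case: (boolP ((u \in y2) && (w \in y2))) => [/andP [uy wy]|n2].
  have [z [Uz Sz Ez Cz]] := ear_lemma Se1 SX U2 S2 (C2 e1 Se1 Pb1 Pc1) (C2 rX SX PbX PcX)
    uy wy uw Pq1 Uq q2 Hq.
  by exists z; rewrite Cz.
have in_b : forall v, v \in s :: t :: la ++ lb ++ lc -> v \notin y1 -> v \in lb.
  move=> v; rewrite M1 !inE !mem_cat.
  by case: (v == s); case: (v == t); case: (v \in la); case: (v \in lb); case: (v \in lc).
have in_a : forall v, v \in s :: t :: la ++ lb ++ lc -> v \notin y2 -> v \in la.
  move=> v; rewrite M2 !inE !mem_cat.
  by case: (v == s); case: (v == t); case: (v \in la); case: (v \in lb); case: (v \in lc).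
have b_y2 : forall v, v \in lb -> v \in y2 by move=> v vb; rewrite M2 !inE mem_cat vb !orbT.
have qV' : forall v, v \in rev qe -> v \notin s :: t :: la ++ lb ++ lc.
  by move=> v; rewrite mem_rev; apply: qV.
case: (boolP (u \in y1)) => uy1.
  have wy1 : w \notin y1 by move: n1; rewrite uy1.
  have wb := in_b w wV wy1.
  have uy2 : u \notin y2 by move: n2; rewrite (b_y2 w wb) andbT.
  have ua := in_a u uV uy2.
  have [z [Uz Sz Ez Cz]] := case3 st Ua Ub Uc Dab Dac Dbc Nac Se2 Pa2 Pc2 Side wb ua
    (rev_ear_uniq Uq) qV' (rev_ear Se2 Pq2).
  by exists z; rewrite Cz orbT.
have ub := in_b u uV uy1.
have wy2 : w \notin y2 by move: n2; rewrite (b_y2 u ub).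
have wa := in_a w wV wy2.
have [z [Uz Sz Ez Cz]] := case3 st Ua Ub Uc Dab Dac Dbc Nac Se2 Pa2 Pc2 Side ub wa Uq qV Pq2.
by exists z; rewrite Cz orbT.
Qed.

End Core2.

Section Main1.
Variables T K : finType.
Implicit Types G H C X F : cgraph T K.

Lemma H_props C X F : is_graph C -> is_graph X -> rainbow C -> F \subset X -> rainbow F ->
  Col X :&: Col (C :\: X) = set0 ->
  [/\ is_graph (F :|: [set p in C | p.1 \notin Edg X]),
      rainbow (F :|: [set p in C | p.1 \notin Edg X]),
      (F :|: [set p in C | p.1 \notin Edg X]) \subset C :|: X,
      forall p, p \in F -> p.1 \in Edg (F :|: [set p in C | p.1 \notin Edg X]) &
      forall a b, adj (Edg C) a b && ~~ adj (Edg X) a b ->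
        adj (Edg (F :|: [set p in C | p.1 \notin Edg X])) a b].
Proof.
move=> [GC2 GCi] [GX2 GXi] RC /subsetP FX /rainbowP RF Hcol.
set E := [set p in C | p.1 \notin Edg X].
have EdgX : forall p, p \in X -> p.1 \in Edg X by move=> p pX; apply/imsetP; exists p.
have inH : forall p, p \in F :|: E -> (p \in F /\ p \in X) \/ (p \in C /\ p.1 \notin Edg X).
  by move=> p; rewrite !inE => /orP [pF|/andP [pC pE]]; [left; split => //; apply: FX|right].
split.
- split=> [p /inH [[_ pX]|[pC _]]|p q /inH [[_ pX]|[pC pE]] /inH [[_ qX]|[qC qE]] E1].
  + exact: GX2.
  + exact: GC2.
  + exact: GXi.
  + by move: qE; rewrite -E1 EdgX.
  + by move: pE; rewrite E1 EdgX.
  + exact: GCi.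
- apply/rainbowP => p q /inH [[pF pX]|[pC pE]] /inH [[qF qX]|[qC qE]] E2.
  + exact: RF.
  + exfalso; have : p.2 \in Col X :&: Col (C :\: X).
      rewrite inE; apply/andP; split; apply/imsetP; first by exists p.
      exists q => //; rewrite !inE qC andbT; apply/negP => qX'.
      by rewrite EdgX in qE.
    by rewrite Hcol inE.
  + exfalso; have : q.2 \in Col X :&: Col (C :\: X).
      rewrite inE; apply/andP; split; apply/imsetP; first by exists q.
      exists p => //; rewrite !inE pC andbT; apply/negP => pX'.
      by rewrite EdgX in pE.
    by rewrite Hcol inE.
  + by move/rainbowP: RC; apply.
- apply/subsetP => p /inH [[_ pX]|[pC _]]; rewrite inE ?pX ?pC ?orbT //.
- by move=> p pF; apply/imsetP; exists p => //; rewrite inE pF.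
- move=> a b /andP [/imsetP [p pC pab] nX]; apply/imsetP; exists p => //.
  by rewrite !inE pC -pab nX orbT.
Qed.

Lemma is_path_seq (P : cgraph T K) (s t : T) : is_path P s t ->
  exists l, [/\ s != t, uniq (s :: rcons l t), Edg P = path_edges (s :: rcons l t),
    path (adj (Edg P)) s (rcons l t) & forall v, (v \in Vtx P) = (v \in s :: rcons l t)].
Proof.
case=> _ [q [st Uq Lq Eq]].
case/lastP: q Uq Lq Eq => [|l x] Uq Lq Eq; first by rewrite /= in Lq; rewrite Lq eqxx in st.
rewrite last_rcons in Lq; subst x.
exists l; split => //; first by rewrite -pe_sub Eq.
have Hn : rcons l t != [::] by rewrite -size_eq0 size_rcons.
exact: Vtx_path Eq Hn.
Qed.

Lemma sub_cycle (r r' : rel T) s : (forall a b, r a b -> r' a b) -> cycle r s -> cycle r' s.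
Proof. by case: s => //= x s H; apply: sub_path. Qed.

End Main1.

Section Main2.
Variables T K : finType.
Implicit Types G H C X F P Q : cgraph T K.

Lemma Vtx_union G H : Vtx (G :|: H) = Vtx G :|: Vtx H.
Proof. exact: bigcup_setU. Qed.

Lemma Edg_sub G H : G \subset H -> Edg G \subset Edg H.
Proof. exact: imsetS. Qed.

Lemma Dgen P Q (s t : T) l m : uniq (s :: rcons l t) ->
  (forall v, (v \in Vtx P) = (v \in s :: rcons l t)) ->
  (forall v, (v \in Vtx Q) = (v \in s :: rcons m t)) ->
  Vtx P :&: Vtx Q \subset [set s; t] -> forall v, v \in l -> v \in m -> False.
Proof.
move=> U VP VQ /subsetP S v vl vm.
have : v \in [set s; t] by apply: S; rewrite inE VP VQ !inE !mem_rcons !inE vl vm !orbT.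
move: U; rewrite /= mem_rcons inE negb_or rcons_uniq => /andP [/andP [_ sl] /andP [tl _]].
by rewrite !inE => /orP [/eqP vs|/eqP vt]; [rewrite -vs vl in sl|rewrite -vt vl in tl].
Qed.

Lemma Ngen P Q (s t : T) l m : Edg P = path_edges (s :: rcons l t) ->
  Edg Q = path_edges (s :: rcons m t) -> Edg P :&: Edg Q = set0 ->
  (l != [::]) || (m != [::]).
Proof.
case: l => [|? ?]; case: m => [|? ?] // EP EQ E.
have : [set s; t] \in Edg P :&: Edg Q.
  by rewrite inE EP EQ /path_edges /=; apply/andP; split; apply/imsetP; exists (s, t);
    rewrite ?inE.
by rewrite E inE.
Qed.

Lemma side_lemma X P H (f : cedge T K) (s t : T) lb :
  is_graph X -> P \subset X -> f \in P ->
  (forall p, p \in X -> p != f -> p.1 \in Edg H) ->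
  uniq (s :: rcons lb t) -> path (adj (Edg P)) s (rcons lb t) ->
  forall b1 v b2, lb = b1 ++ v :: b2 ->
    path (adj (Edg H)) s (rcons b1 v) || path (adj (Edg H)) v (rcons b2 t).
Proof.
move=> [GX2 _] /subsetP PX fP HX U Pp b1 v b2 E; subst lb.
have Key : forall a b, adj (Edg P) a b -> [set a; b] != f.1 -> adj (Edg H) a b.
  move=> a b /imsetP [p pP pab] nf; rewrite /adj pab; apply: HX; first exact: PX.
  by apply/negP => /eqP pf; rewrite pab pf eqxx in nf.
have ES : s :: rcons (b1 ++ v :: b2) t = (s :: rcons b1 v) ++ rcons b2 t.
  by rewrite rcons_cat /= cat_rcons.
move: Pp; rewrite rcons_cat cat_path /= => /andP [P1 /andP [ev P2]].
have PL : path (adj (Edg P)) s (rcons b1 v) by rewrite rcons_path P1.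
have LR : forall x, x \in s :: rcons b1 v -> x \in v :: rcons b2 t -> x = v.
  move=> x xL; rewrite inE => /orP [/eqP //|xR]; exfalso.
  move: U; rewrite ES cat_uniq => /and3P [_ /hasPn /(_ x xR) /negP]; exact.
have f2 : #|f.1| = 2 by apply: GX2; apply: PX.
case: (boolP (f.1 \subset [set x | x \in s :: rcons b1 v])) => Hf.
  apply/orP; right.
  apply: (sub_in_path (P := mem (v :: rcons b2 t))) (P2) => [a b aR bR /= Hab|].
    apply: Key Hab _; apply/negP => /eqP Ef.
    have : f.1 \subset [set v].
      apply/subsetP => x xf; rewrite inE; apply/eqP; apply: LR.
        by move/subsetP: Hf => /(_ x xf); rewrite inE.
      by move: xf; rewrite -Ef !inE => /orP [/eqP ->|/eqP ->].
    by move/subset_leq_card; rewrite cards1 f2.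
  by apply/allP => x.
apply/orP; left.
apply: (sub_in_path (P := mem (s :: rcons b1 v))) PL => [a b aL bL /= Hab|].
  apply: Key Hab _; apply/negP => /eqP Ef; move/negP: Hf; apply.
  by apply/subsetP => x; rewrite -Ef !inE => /orP [/eqP ->|/eqP ->].
by apply/allP => x.
Qed.

End Main2.

Section Main3.
Variables T K : finType.
Implicit Types G H C X F P Q : cgraph T K.

Lemma adj_sub G H a b : G \subset H -> adj (Edg G) a b -> adj (Edg H) a b.
Proof. by move=> GH; apply: (subsetP (Edg_sub GH)). Qed.

Lemma bad_core C X Pa Pb Pc (s t : T) (f1 f2 : cedge T K) (u w : T) (qe : seq T) :
  is_graph C -> is_graph X -> rainbow C -> Col X :&: Col (C :\: X) = set0 ->
  X = Pa :|: Pb :|: Pc ->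
  is_path Pa s t -> is_path Pb s t -> is_path Pc s t ->
  Vtx Pa :&: Vtx Pb \subset [set s; t] -> Vtx Pa :&: Vtx Pc \subset [set s; t] ->
  Vtx Pb :&: Vtx Pc \subset [set s; t] ->
  Edg Pa :&: Edg Pb = set0 -> Edg Pa :&: Edg Pc = set0 -> Edg Pb :&: Edg Pc = set0 ->
  f1 \in Pa -> f2 \in Pb -> rainbow (X :\ f1) -> rainbow (X :\ f2) ->
  (u \in Vtx X) && (w \in Vtx X) -> u != w -> uniq (u :: rcons qe w) ->
  all (fun v => v \notin Vtx X) qe ->
  path (fun a b => adj (Edg C) a b && ~~ adj (Edg X) a b) u (rcons qe w) ->
  exists D : cgraph T K, [/\ even_cycle D, rainbow D & D \subset C :|: X].
Proof.
move=> GC GX RC Hcol EX Ppa Ppb Ppc Vab Vac Vbc Eab Eac Ebc f1a f2b R1 R2 /andP [uX wX]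
  uw Uq qA Pq.
have [la [st Ua EPa PPa VPa]] := is_path_seq Ppa.
have [lb [_ Ub EPb PPb VPb]] := is_path_seq Ppb.
have [lc [_ Uc EPc PPc VPc]] := is_path_seq Ppc.
have aX : Pa \subset X by apply/subsetP => p pa; rewrite EX !inE pa.
have bX : Pb \subset X by apply/subsetP => p pb; rewrite EX !inE pb !orbT.
have cX : Pc \subset X by apply/subsetP => p pc; rewrite EX !inE pc !orbT.
have notin : forall P Q (f : cedge T K), f \in Q -> Edg P :&: Edg Q = set0 -> f \notin P.
  move=> P Q f fQ E; apply/negP => fP.
  have : f.1 \in Edg P :&: Edg Q by rewrite inE; apply/andP; split; apply/imsetP; exists f.
  by rewrite E inE.
have f2a : f2 \notin Pa := notin _ _ _ f2b Eab.
have f2c : f2 \notin Pc by apply: (notin _ _ _ f2b); rewrite setIC.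
have f1b : f1 \notin Pb by apply: (notin _ _ _ f1a); rewrite setIC.
have f1c : f1 \notin Pc by apply: (notin _ _ _ f1a); rewrite setIC.
have [G1 RH1 S1 F1 E1] := H_props GC GX RC (subsetDl X [set f1]) R1 Hcol.
have [G2 RH2 S2 F2 E2] := H_props GC GX RC (subsetDl X [set f2]) R2 Hcol.
set H1 := (X :\ f1) :|: _ in G1 RH1 S1 F1 E1.
set H2 := (X :\ f2) :|: _ in G2 RH2 S2 F2 E2.
have HX1 : forall p, p \in X -> p != f1 -> p.1 \in Edg H1.
  by move=> p pX pf; apply: F1; rewrite !inE pf pX.
have HX2 : forall p, p \in X -> p != f2 -> p.1 \in Edg H2.
  by move=> p pX pf; apply: F2; rewrite !inE pf pX.
have liftP : forall P (f : cedge T K) H, P \subset X -> f \notin P ->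
    (forall p, p \in X -> p != f -> p.1 \in Edg H) ->
    forall l, path (adj (Edg P)) s l -> path (adj (Edg H)) s l.
  move=> P f H PX fP HX l; apply: sub_path => a b /imsetP [p pP pab].
  rewrite /adj pab; apply: HX; first exact: (subsetP PX).
  by apply/negP => /eqP pf; rewrite -pf pP in fP.
have VX : forall v, (v \in Vtx X) = (v \in s :: t :: la ++ lb ++ lc).
  move=> v; rewrite EX !Vtx_union !inE VPa VPb VPc !inE !mem_cat !mem_rcons !inE.
  by case: (v == s); case: (v == t); case: (v \in la); case: (v \in lb); case: (v \in lc).
have XX : forall P l, P \subset X -> path (adj (Edg P)) s l -> path (adj (Edg X)) s l.
  by move=> P l PX; apply: sub_path => a b; apply: adj_sub.
have [y [Uy Sy Ey Cy]] : exists y, [/\ uniq y, 2 < size y, ~~ odd (size y) &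
    cycle (adj (Edg H1)) y || cycle (adj (Edg H2)) y].
  apply: (core (rX := adj (Edg X)) (u := u) (w := w) (qe := qe) st Ua Ub Uc).
  - exact: Dgen Ua VPa VPb Vab.
  - exact: Dgen Ua VPa VPc Vac.
  - exact: Dgen Ub VPb VPc Vbc.
  - exact: Ngen EPa EPc Eac.
  - exact: Ngen EPb EPc Ebc.
  - exact: adjC.
  - exact: adjC.
  - exact: adjC.
  - exact: (liftP Pa f2 H2 aX f2a HX2 _ PPa).
  - exact: (liftP Pc f2 H2 cX f2c HX2 _ PPc).
  - exact: (liftP Pb f1 H1 bX f1b HX1 _ PPb).
  - exact: (liftP Pc f1 H1 cX f1c HX1 _ PPc).
  - exact: XX PPa.
  - exact: XX PPb.
  - exact: XX PPc.
  - exact: side_lemma GX bX f2b HX2 Ub PPb.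
  - by rewrite -VX.
  - by rewrite -VX.
  - exact: uw.
  - exact: Uq.
  - by move=> v vq; rewrite -VX; apply: (allP qA).
  - by apply: sub_path Pq => a b; apply: E1.
  - by apply: sub_path Pq => a b; apply: E2.
  - by move=> q0; subst qe; move: Pq => /= /andP [/andP [_ ->]].
case/orP: Cy => Cy.
  have [D [ED RD] DH] := make_D G1 RH1 Uy Sy Ey Cy.
  by exists D; split => //; apply: subset_trans DH S1.
have [D [ED RD] DH] := make_D G2 RH2 Uy Sy Ey Cy.
by exists D; split => //; apply: subset_trans DH S2.
Qed.

End Main3.

Section Main4.
Variables T K : finType.

Lemma rainbow_del (X : cgraph T K) f g : almost_rainbow X -> f \in X -> g \in X -> f != g ->
  f.2 = g.2 -> rainbow (X :\ f).
Proof.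
move=> AR fX gX fg Ec.
have Hc : Col (X :\ f) = Col X.
  apply/setP => c; apply/imsetP/imsetP => [[p pXf ->]|[p pX ->]].
    by exists p => //; move: pXf; rewrite !inE => /andP [].
  case: (boolP (p == f)) => [/eqP pf|pf].
    by exists g; [rewrite !inE eq_sym fg gX | rewrite pf Ec].
  by exists p => //; rewrite !inE pf pX.
rewrite /rainbow Hc; move: AR; rewrite /almost_rainbow (cardsD1 f X) fX add1n.
by case.
Qed.

End Main4.

Unset Implicit Arguments.

Theorem lemma2p5 (T K : finType) (C X : cgraph T K) :
  is_cycle C -> rainbow C ->
  ((is_cycle X /\ rainbow X) \/ bad_piece X) ->
  Col X :&: Col (C :\: X) = set0 ->
  Edg C :\: Edg X != set0 ->
  2 <= #|Vtx C :&: Vtx X| ->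
  exists D : cgraph T K, [/\ even_cycle D, rainbow D & D \subset C :|: X].
Proof.
move=> [GC [c [Uc Sc EC]]] RC HX Hcol HE Hcard.
have VC : forall v, (v \in Vtx C) = (v \in c) := Vtx_cycle EC.
have Hc2 : 1 < #|[set v | v \in c] :&: Vtx X|.
  have -> : [set v | v \in c] = Vtx C by apply/setP => v; rewrite inE VC.
  exact: Hcard.
have nCX : ~~ cycle (adj (Edg X)) c by rewrite -ce_sub -EC -setD_eq0.
have [u [qe [w [uwX uw Uq qA Pq]]]] := ear_exists Uc EC nCX Hc2.
case: HX => [[[GX [x [Ux Sx EXx]]] RX] | [AR _ [P1 [P2 [P3 [s [t [Th R1 R2 R3]]]]]]]].
  have [G RH S F E] := H_props GC GX RC (subxx X) RX Hcol.
  set H := X :|: _ in G RH S F E.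
  have VX := Vtx_cycle EXx.
  move/andP: uwX => [uX wX].
  have CX : cycle (adj (Edg X)) x by rewrite -ce_sub EXx.
  have CH : cycle (adj (Edg H)) x.
    by apply: sub_cycle CX => a b /imsetP [p pX pab]; rewrite /adj pab; apply: F.
  have ux : u \in x by rewrite -VX.
  have wx : w \in x by rewrite -VX.
  have qx : forall v, v \in qe -> v \notin x by move=> v vq; rewrite -VX; apply: (allP qA).
  have PH : path (adj (Edg H)) u (rcons qe w) by apply: sub_path Pq => a b; apply: E.
  have Hq : qe = [::] -> ~~ adj (Edg X) u w.
    by move=> q0; subst qe; move: Pq => /= /andP [/andP [_ ->]].
  have [y [Uy Sy Ey Cy]] := ear_lemma (@adjC T (Edg H)) (@adjC T (Edg X)) Ux Sx CH CX
     ux wx uw PH Uq qx Hq.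
  have [D [ED RD] DH] := make_D G RH Uy Sy Ey Cy.
  by exists D; split => //; apply: subset_trans DH S.
case: Th => GX EX [Pp1 Pp2 Pp3] [V12 V13 V23] [E12 E13 E23].
have [f1 [f2 [f1X f2X f12 col12]]] :
    exists f1 f2, [/\ f1 \in X, f2 \in X, f1 != f2 & f1.2 = f2.2].
  case: (boolP [exists f1 in X, exists f2 in X, (f1 != f2) && (f1.2 == f2.2)]).
    move/existsP => [f1 /andP [f1X /existsP [f2 /andP [f2X /andP [ne /eqP e]]]]].
    by exists f1, f2.
  move/negP => N; exfalso.
  have : rainbow X.
    apply/rainbowP => p q pX qX e; apply/eqP; apply/negPn/negP => ne; apply: N.
    by apply/existsP; exists p; rewrite pX; apply/existsP; exists q; rewrite qX ne e eqxx.
  rewrite /rainbow => Hr; rewrite /almost_rainbow Hr in AR.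
  by move: (leqnn #|X|); rewrite -{1}AR ltnn.
have Rf1 := rainbow_del AR f1X f2X f12 col12.
have f21 : f2 != f1 by rewrite eq_sym.
have Rf2 := rainbow_del AR f2X f1X f21 (esym col12).
have Hf : forall f, f \in X -> [\/ f \in P1, f \in P2 | f \in P3].
  move=> f; rewrite EX !inE => /orP [/orP [h|h]|h]; by [constructor 1|constructor 2|constructor 3].
have same : forall P, rainbow P -> f1 \in P -> f2 \in P -> False.
  move=> P /rainbowP RP h1 h2; have := RP f1 f2 h1 h2 col12; move/eqP; by rewrite (negbTE f12).
have V21 : Vtx P2 :&: Vtx P1 \subset [set s; t] by rewrite setIC.
have V31 : Vtx P3 :&: Vtx P1 \subset [set s; t] by rewrite setIC.
have V32 : Vtx P3 :&: Vtx P2 \subset [set s; t] by rewrite setIC.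
have E21 : Edg P2 :&: Edg P1 = set0 by rewrite setIC.
have E31 : Edg P3 :&: Edg P1 = set0 by rewrite setIC.
have E32 : Edg P3 :&: Edg P2 = set0 by rewrite setIC.
have XE : forall A B D : cgraph T K,
    (forall p, (p \in A) || (p \in B) || (p \in D) = (p \in P1) || (p \in P2) || (p \in P3)) ->
    X = A :|: B :|: D.
  by move=> A B D H; rewrite EX; apply/setP => p; rewrite !inE H.
have X132 : X = P1 :|: P3 :|: P2.
  by apply: XE => p; case: (p \in P1); case: (p \in P2); case: (p \in P3).
have X213 : X = P2 :|: P1 :|: P3.
  by apply: XE => p; case: (p \in P1); case: (p \in P2); case: (p \in P3).
have X231 : X = P2 :|: P3 :|: P1.
  by apply: XE => p; case: (p \in P1); case: (p \in P2); case: (p \in P3).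
have X312 : X = P3 :|: P1 :|: P2.
  by apply: XE => p; case: (p \in P1); case: (p \in P2); case: (p \in P3).
have X321 : X = P3 :|: P2 :|: P1.
  by apply: XE => p; case: (p \in P1); case: (p \in P2); case: (p \in P3).
case: (Hf f1 f1X) => h1; case: (Hf f2 f2X) => h2.
- by exfalso; exact: same R1 h1 h2.
- exact: (bad_core GC GX RC Hcol EX
    Pp1 Pp2 Pp3 V12 V13 V23 E12 E13 E23 h1 h2 Rf1 Rf2 uwX uw Uq qA Pq).
- exact: (bad_core GC GX RC Hcol X132
    Pp1 Pp3 Pp2 V13 V12 V32 E13 E12 E32 h1 h2 Rf1 Rf2 uwX uw Uq qA Pq).
- exact: (bad_core GC GX RC Hcol X213
    Pp2 Pp1 Pp3 V21 V23 V13 E21 E23 E13 h1 h2 Rf1 Rf2 uwX uw Uq qA Pq).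
- by exfalso; exact: same R2 h1 h2.
- exact: (bad_core GC GX RC Hcol X231
    Pp2 Pp3 Pp1 V23 V21 V31 E23 E21 E31 h1 h2 Rf1 Rf2 uwX uw Uq qA Pq).
- exact: (bad_core GC GX RC Hcol X312
    Pp3 Pp1 Pp2 V31 V32 V12 E31 E32 E12 h1 h2 Rf1 Rf2 uwX uw Uq qA Pq).
- exact: (bad_core GC GX RC Hcol X321
    Pp3 Pp2 Pp1 V32 V31 V21 E32 E31 E21 h1 h2 Rf1 Rf2 uwX uw Uq qA Pq).
- by exfalso; exact: same R3 h1 h2.
Qed.
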